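(* Suppose $v_0=0$ and the agent is protected by limited liability. Let $F\in\mathcal{F}(\mu)$ have support $\{\mathbf{x}_1,\dots,\mathbf{x}_m\}\subseteq\operatorname{int}\Delta(\Theta)$, $m\le n$, and let $(M,t)$ be a contract implementing $F$ that minimizes the principal's expected cost among all contracts implementing $F$. Then for each state $k=1,\dots,n$ there exists $j^*(k)\in\{1,\dots,m\}$ such that $t(\mathbf{x}_{j^*(k)},\theta_k)=0$, and all other transfers are determined by optimal learning: $t(\mathbf{x}_j,\theta_k)=X^k(j,j^*(k))$ for all $j=1,\dots,m$.
   Context: Let $\Theta=\{\theta_1,\dots,\theta_n\}$ be a finite set of states and $\mu\in\Delta(\Theta)$ a full-support prior. A belief $\mathbf{x}\in\Delta(\Theta)$ is identified with its first $n-1$ entries, $x^k$ = probability of $\theta_k$, $x^n=1-\sum_{k<n}x^k$. $\mathcal{F}(\mu)$ is the set of Bayes-plausible distributions over posteriors. Acquiring $F$ costs $C(F)=\kappa\int c\,dF$, $\kappa>0$, $c:\Delta(\Theta)\to\mathbb{R}_+$ strictly convex, twice continuously differentiable, bounded on the interior, $c(\mu)=0$; $c_k$ is its partial derivative in the $k$-th coordinate ($k\le n-1$). A contract $(M,t)$: compact message set $M$ and transfer $t:M\times\Theta\to\mathbb{R}_+$ (limited liability) in the agent's utils; the agent's utility for money $v$ is strictly increasing, continuously differentiable, $v(0)=0$, and paying $t$ utils costs the principal $v^{-1}(t)$. The agent's outside option is $v_0$. Timing: the principal offers $(M,t)$; the agent rejects (getting $v_0$) or accepts, chooses any $G\in\mathcal{F}(\mu)$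 paying $C(G)$, privately observes a posterior $\mathbf{x}\sim G$, then walks away (getting $v_0$) or sends $d\in M$ and receives $t(d,\theta)$ in realized state $\theta$. $N(\mathbf{x}\mid d)=\sum_k x^k t(d,\theta_k)-\kappa c(\mathbf{x})$. $(M,t)$ implements $F$ if $M=\operatorname{supp}(F)$, $t\ge0$, and ''accept, acquire $F$, send the realized posterior as message'' is optimal for the agent among all strategies (rejecting; or accepting, acquiring any $G$, and at each posterior sending any possibly randomized message or walking away). The principal's expected cost is $\sum_j F(\{\mathbf{x}_j\})\sum_k x_j^k v^{-1}(t(\mathbf{x}_j,\theta_k))$. For $i,j$ define $\Xi_{ij}=\kappa[c(\mathbf{x}_i)-\sum_{k=1}^{n-1}x_i^kc_k(\mathbf{x}_i)]-\kappa[c(\mathbf{x}_j)-\sum_{k=1}^{n-1}x_j^kc_k(\mathbf{x}_j)]$, $X^n(i,j)=\Xi_{ij}$, and $X^k(i,j)=\kappa c_k(\mathbf{x}_i)-\kappa c_k(\mathbf{x}_j)+\Xi_{ij}$ for $k\le n-1$ (so $X^k(j,j)=0$). *)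

(* Defs.v *)
From HB Require Import structures.
From mathcomp Require Import all_boot all_order all_algebra.
From mathcomp Require Import all_classical all_reals all_analysis.
Set Implicit Arguments. Unset Strict Implicit. Unset Printing Implicit Defensive.
Import Order.TTheory GRing.Theory Num.Theory.
Import numFieldNormedType.Exports.
Local Open Scope ring_scope.
Local Open Scope classical_set_scope.

Section Model.
Variable R : realType.
Variable n : nat.   (* number of states; theta_k is index k : 'I_n,
                       theta_n (the "last" state) is the index of value n.-1 *)

(* beliefs are row vectors x : 'rV_n, x 0 k = probability of theta_k *)
Definition in_simplex (x : 'rV[R]_n) : Prop :=
  (forall k, 0 <= x 0 k) /\ \sum_(k < n) x 0 k = 1.

Definition in_int_simplex (x : 'rV[R]_n) : Prop :=
  (forall k, 0 < x 0 k) /\ \sum_(k < n) x 0 k = 1.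

Definition is_last (k : 'I_n) : bool := (k : nat) == n.-1.

(* direction e_k - e_n: moving coordinate k of the first n-1 coordinates
   while x^n = 1 - sum_{k<n} x^k adjusts. *)
Definition dirv (k : 'I_n) : 'rV[R]_n :=
  \row_(i < n) (((i == k) : nat)%:R - ((is_last i) : nat)%:R).

(* c_k(x): partial derivative of c w.r.t. the k-th coordinate (k <= n-1) in
   the parametrization by the first n-1 coordinates. *)
Definition cpart (c : 'rV[R]_n -> R) (x : 'rV[R]_n) (k : 'I_n) : R :=
  'D_(dirv k) c x.

Definition xiterm (kappa : R) (c : 'rV[R]_n -> R) (x : 'rV[R]_n) : R :=
  kappa * (c x - \sum_(k < n | ~~ is_last k) x 0 k * cpart c x k).

Definition Xi (kappa : R) c (xi xj : 'rV[R]_n) : R :=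
  xiterm kappa c xi - xiterm kappa c xj.

Definition Xk (kappa : R) c (xi xj : 'rV[R]_n) (k : 'I_n) : R :=
  if is_last k then Xi kappa c xi xj
  else kappa * cpart c xi k - kappa * cpart c xj k + Xi kappa c xi xj.

Definition strictly_convex_on_simplex (c : 'rV[R]_n -> R) : Prop :=
  forall x y : 'rV[R]_n, in_simplex x -> in_simplex y -> x != y ->
  forall a : R, 0 < a < 1 ->
    c (a *: x + (1 - a) *: y) < a * c x + (1 - a) * c y.

Definition C2_on_int_simplex (c : 'rV[R]_n -> R) : Prop :=
  forall k l : 'I_n,
    (forall x, in_int_simplex x ->
       derivable c x (dirv k) /\ derivable ('D_(dirv k) c) x (dirv l)) /\
    {within in_int_simplex, continuous ('D_(dirv l) ('D_(dirv k) c))}.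

Definition bayes_plausible (mu : 'rV[R]_n) (p : nat)
  (w : 'I_p -> R) (y : 'I_p -> 'rV[R]_n) : Prop :=
  (forall i, 0 <= w i) /\ \sum_(i < p) w i = 1 /\
  (forall i, in_simplex (y i)) /\ \sum_(i < p) w i *: y i = mu.

(* expected utility (in utils) of the transfer for message d at posterior x *)
Definition msg_value (m : nat) (t : 'I_m -> 'I_n -> R) (d : 'I_m)
  (x : 'rV[R]_n) : R := \sum_(k < n) x 0 k * t d k.

(* Payoff of accepting contract ('I_m, t), acquiring G = (w,y) and playing the
   randomized strategy s : at posterior y i, send message Some d with prob.
   s i (Some d), walk away (getting v0) with prob. s i None. *)
Definition agent_payoff (kappa v0 : R) (c : 'rV[R]_n -> R) (m : nat)
  (t : 'I_m -> 'I_n -> R) (p : nat) (w : 'I_p -> R) (y : 'I_p -> 'rV[R]_n)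
  (s : 'I_p -> option 'I_m -> R) : R :=
  \sum_(i < p) w i *
    (\sum_(d : option 'I_m)
        s i d * (match d with Some d' => msg_value t d' (y i) | None => v0 end)
     - kappa * c (y i)).

Definition valid_strategy (m p : nat) (s : 'I_p -> option 'I_m -> R) : Prop :=
  forall i, (forall d, 0 <= s i d) /\ \sum_(d : option 'I_m) s i d = 1.

Definition truthful_payoff (kappa : R) (c : 'rV[R]_n -> R) (m : nat)
  (t : 'I_m -> 'I_n -> R) (wF : 'I_m -> R) (xs : 'I_m -> 'rV[R]_n) : R :=
  \sum_(j < m) wF j * (msg_value t j (xs j) - kappa * c (xs j)).

Definition implements (mu : 'rV[R]_n) (kappa v0 : R) (c : 'rV[R]_n -> R)
  (m : nat) (wF : 'I_m -> R) (xs : 'I_m -> 'rV[R]_n)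
  (t : 'I_m -> 'I_n -> R) : Prop :=
  (forall j k, 0 <= t j k) /\
  v0 <= truthful_payoff kappa c t wF xs /\
  (forall (p : nat) (w : 'I_p -> R) (y : 'I_p -> 'rV[R]_n)
          (s : 'I_p -> option 'I_m -> R),
      bayes_plausible mu w y -> valid_strategy s ->
      agent_payoff kappa v0 c t w y s <= truthful_payoff kappa c t wF xs).

Definition principal_cost (vinv : R -> R) (m : nat) (wF : 'I_m -> R)
  (xs : 'I_m -> 'rV[R]_n) (t : 'I_m -> 'I_n -> R) : R :=
  \sum_(j < m) wF j * \sum_(k < n) xs j 0 k * vinv (t j k).

End Model.

(* Main.v *)
Set Warnings "-all".
Require Import Defs.
From HB Require Import structures.
From mathcomp Require Import all_boot all_order all_algebra.
From mathcomp Require Import all_classical all_reals all_analysis.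
From mathcomp Require Import ring lra.
Import Order.TTheory GRing.Theory Num.Theory.
Import numFieldNormedType.Exports.
Local Open Scope ring_scope.
Local Open Scope classical_set_scope.
Set Implicit Arguments. Unset Strict Implicit.


Lemma cvg_sumR (R : realType) (T : Type) (F : set_system T) (FF : Filter F)
  (I : finType) (f : I -> T -> R) (a : I -> R) :
  (forall i, f i x @[x --> F] --> a i) ->
  (\sum_i f i x) @[x --> F] --> \sum_i a i.
Proof.
move=> H; apply: (@cvg_big R^o I +%R 0 xpredT _ _ _ _ _ _ FF) => //.
exact: add_continuous.
Qed.

Lemma sum_delta (R : realType) (I : finType) (k : I) (f : I -> R) :
  \sum_i ((i == k)%:R * f i) = f k.
Proof.
rewrite (bigD1 k) //= eqxx mul1r big1 ?addr0 // => i /negbTE ->.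
by rewrite mul0r.
Qed.

Lemma is_last_eq (n : nat) (L i : 'I_n) : is_last L -> is_last i = (i == L).
Proof.
rewrite /is_last => /eqP hL; apply/idP/idP => [/eqP h|/eqP ->].
  by apply/eqP/val_inj; rewrite /= h hL.
by rewrite hL.
Qed.

Lemma dirvE (R : realType) (n : nat) (L : 'I_n) (k i : 'I_n) : is_last L ->
  dirv R k 0 i = (i == k)%:R - (i == L)%:R.
Proof. by move=> hL; rewrite mxE (is_last_eq _ hL). Qed.

Lemma sum_dirv (R : realType) (n : nat) (L k : 'I_n) : is_last L ->
  \sum_i dirv R k 0 i = 0.
Proof.
move=> hL; under eq_bigr do rewrite (dirvE _ _ _ hL).
rewrite sumrB.
have E : forall j : 'I_n, \sum_i ((i == j)%:R : R) = 1.
  move=> j; rewrite -[RHS](sum_delta j (fun=> (1:R))).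
  by apply: eq_bigr => i _; rewrite mulr1.
by rewrite !E subrr.
Qed.

Lemma dirv_last (R : realType) (n : nat) (k : 'I_n) : is_last k -> dirv R k = 0.
Proof.
move=> hk; apply/rowP => i; rewrite (dirvE _ _ _ hk) !mxE subrr //.
Qed.

Lemma msg_dirv (R : realType) (n m : nat) (L : 'I_n) (t : 'I_m -> 'I_n -> R) l k :
  is_last L -> msg_value t l (dirv R k) = t l k - t l L.
Proof.
move=> hL; rewrite /msg_value.
under eq_bigr do rewrite (dirvE _ _ _ hL) mulrBl.
by rewrite sumrB !sum_delta.
Qed.

Lemma msg_lin (R : realType) (n m : nat) (t : 'I_m -> 'I_n -> R) l a
  (u w : 'rV[R]_n) :
  msg_value t l (a *: u + w) = a * msg_value t l u + msg_value t l w.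
Proof.
rewrite /msg_value mulr_sumr -big_split /=; apply: eq_bigr => i _.
by rewrite !mxE mulrDl mulrA.
Qed.

Lemma decomp (R : realType) (n : nat) (L : 'I_n) (u : 'rV[R]_n) : is_last L ->
  \sum_i u 0 i = 0 -> \sum_k u 0 k *: dirv R k = u.
Proof.
move=> hL hu; apply/rowP => i; rewrite summxE.
under eq_bigr do rewrite !mxE (is_last_eq _ hL) mulrBr.
rewrite sumrB.
have E1 : \sum_k u 0 k * (i == k)%:R = u 0 i.
  by rewrite -[RHS](sum_delta i (fun k => u 0 k)); apply: eq_bigr => k _; rewrite eq_sym mulrC.
rewrite E1 -mulr_suml hu mul0r subr0 //.
Qed.



Lemma right_sub (R : realType) : ((0:R)^'+) `=>` ((0:R)^').
Proof.
move=> A; rewrite /dnbhs /within /=; apply: filterS => y Ay y0.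
by apply: Ay; rewrite lt0r_neq0.
Qed.

Lemma quot_scaled (R : realType) (n : nat) (c : 'rV[R]_n -> R) x d (b : R) :
  derivable c x d ->
  (fun h => h^-1 * (c (h *: (b *: d) + x) - c x)) @ 0^'+ --> b * 'D_d c x.
Proof.
move=> dc.
have [->|b0] := eqVneq b 0.
  rewrite mul0r; under eq_fun do rewrite scale0r scaler0 add0r subrr mulr0.
  exact: cvg_cst.
have E : (fun h => h^-1 * (c (h *: (b *: d) + x) - c x)) =
   (fun h => b * ((fun h' => h'^-1 *: ((c \o shift x) (h' *: d) - c x)) (h * b))).
  apply: funext => h /=; rewrite scalerA.
  have -> : forall r : R, (h * b)^-1 *: r = (h * b)^-1 * r by [].
  by rewrite invfM [h^-1 * b^-1]mulrC !mulrA mulfV // mul1r.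
rewrite E.
set f := (fun h : R => b * _).
suff Hf : f @ 0^' --> b * 'D_d c x.
  exact: cvg_trans (cvg_app f (@right_sub R)) Hf.
rewrite /f; apply: cvgMl_tmp.
have H1 : (fun h : R => h * b) @ 0^' --> (0:R)^'.
  have := @continuous_injective_withinNx _ _ (fun h : R => h * b) 0.
  rewrite mul0r; apply.
    by apply: continuousM; [exact: cvg_id|exact: cvg_cst].
  by move=> y /eqP; rewrite mulf_eq0 (negbTE b0) orbF => /eqP.
exact: (cvg_comp _ _ H1 dc).
Qed.

Lemma lim_le0 (R : realType) (g : R -> R) (L : R) :
  g @ 0^'+ --> L -> (\forall h \near 0^'+, g h <= 0) -> L <= 0.
Proof.
move=> H Hle; rewrite -(cvg_lim _ H) //; apply: limr_le => //.
exact: (cvgP _ H).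
Qed.

Lemma ev_pos (R : realType) (a b : R) : 0 < a ->
  \forall h \near (0:R)^'+, 0 < a + h * b.
Proof.
move=> a0.
have H : (fun h : R => a + h * b) @ (0:R)^'+ --> a.
  have : (fun h : R => a + h * b) @ (0:R) --> a + 0 * b.
    apply: cvgD; first exact: cvg_cst.
    apply: cvgMr_tmp; exact: cvg_id.
  by rewrite mul0r addr0 => /cvg_at_right_filter.
by move: H => /cvgr_gt /(_ 0 a0).
Qed.

Lemma ev_simplex (R : realType) (n : nat) (x v : 'rV[R]_n) :
  in_int_simplex x -> \sum_i v 0 i = 0 ->
  \forall h \near (0:R)^'+, in_simplex (h *: v + x).
Proof.
move=> [xp xs] vs.
have P : \forall h \near (0:R)^'+, forall i, 0 < x 0 i + h * v 0 i.
  apply: filter_forall => i; exact: ev_pos.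
apply: filterS P => h P; split.
  by move=> i; rewrite !mxE addrC ltW.
under eq_bigr do rewrite !mxE.
by rewrite big_split /= -mulr_sumr vs mulr0 add0r.
Qed.



Lemma sum_ev (R : realType) (I : finType) (F : I -> R) :
  \sum_(p < #|I|) F (enum_val p) = \sum_i F i.
Proof. by rewrite (big_enum_val (A := I)). Qed.

Lemma sum_evV (R : realType) (n : nat) (I : finType) (F : I -> 'rV[R]_n) :
  \sum_(p < #|I|) F (enum_val p) = \sum_i F i.
Proof. by rewrite (big_enum_val (A := I)). Qed.

Lemma imp_det (R : realType) (n m : nat) (mu : 'rV[R]_n) kappa
  (c : 'rV[R]_n -> R) (wF : 'I_m -> R) xs t (I : finType) (W : I -> R)
  (Y : I -> 'rV[R]_n) (r : I -> 'I_m) :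
  implements mu kappa 0 c wF xs t -> (forall i, 0 <= W i) ->
  \sum_i W i = 1 -> (forall i, in_simplex (Y i)) -> \sum_i W i *: Y i = mu ->
  \sum_i W i * (msg_value t (r i) (Y i) - kappa * c (Y i))
    <= truthful_payoff kappa c t wF xs.
Proof.
case=> _ [_ H] W0 W1 Ys Wm.
have := H #|I| (fun p => W (enum_val p)) (fun p => Y (enum_val p))
  (fun p d => (d == Some (r (enum_val p)))%:R).
rewrite /agent_payoff.
under eq_bigr do rewrite (sum_delta (Some _) (fun d => match d with Some d' => msg_value t d' _ | None => 0 end)).
rewrite (sum_ev (fun i => W i * (msg_value t (r i) (Y i) - kappa * c (Y i)))).
apply.
  split => //; split; first by rewrite (sum_ev W).
  split => //; by rewrite (sum_evV (fun i => W i *: Y i)).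
move=> p; split => //.
rewrite -[RHS](sum_delta (Some (r (enum_val p))) (fun=> (1:R))).
by apply: eq_bigr => d _; rewrite mulr1.
Qed.



Lemma sum_rowZ (R : realType) (n : nat) (b : R) (v : 'rV[R]_n) :
  \sum_i (b *: v) 0 i = b * \sum_i v 0 i.
Proof. by rewrite mulr_sumr; apply: eq_bigr => i _; rewrite mxE. Qed.

Lemma slopes_le (R : realType) (n m : nat) (mu : 'rV[R]_n) kappa
  (c : 'rV[R]_n -> R) (wF : 'I_m -> R) xs t (L : 'I_n) (i j k : 'I_m) (k0 : 'I_n) :
  is_last L ->
  implements mu kappa 0 c wF xs t ->
  (forall l, 0 < wF l) -> \sum_l wF l = 1 -> \sum_l wF l *: xs l = mu ->
  (forall l, in_int_simplex (xs l)) ->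
  (forall l, derivable c (xs l) (dirv R k0)) ->
  (t i k0 - t i L - kappa * cpart c (xs i) k0)
   - (t j k0 - t j L - kappa * cpart c (xs j) k0) <= 0.
Proof.
move=> hL imp wF0 wF1 wFm xint dc.
pose d := dirv R k0.
pose b l := (l == i)%:R / wF i - (l == j)%:R / wF j.
pose Y h l := h *: (b l *: d) + xs l.
pose Z l := msg_value t l d - kappa * cpart c (xs l) k0.
have sb : \sum_l wF l * b l = 0.
  have -> : \sum_l wF l * b l = \sum_l ((l == i)%:R * (wF l / wF i))
        - \sum_l ((l == j)%:R * (wF l / wF j)).
    by rewrite -sumrB; apply: eq_bigr => l _; rewrite /b mulrBr !mulrA !(mulrC (wF l)).
  by rewrite !sum_delta !divff ?subrr // gt_eqF.
pose G h := \sum_l wF l * (b l * msg_value t l d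
                 - kappa * (h^-1 * (c (h *: (b l *: d) + xs l) - c (xs l)))).
have lim : G @ 0^'+ --> \sum_l wF l * (b l * msg_value t l d - kappa * (b l * 'D_d c (xs l))).
  apply: cvg_sumR => l; apply: cvgMl_tmp; apply: cvgB; first exact: cvg_cst.
  by apply: cvgMl_tmp; apply: quot_scaled.
have val : \sum_l wF l * (b l * msg_value t l d - kappa * (b l * 'D_d c (xs l)))
    = Z i - Z j.
  have -> : \sum_l wF l * (b l * msg_value t l d - kappa * (b l * 'D_d c (xs l)))
     = \sum_l ((l == i)%:R * (wF l / wF i * Z l)) - \sum_l ((l == j)%:R * (wF l / wF j * Z l)).
    rewrite -sumrB; apply: eq_bigr => l _; rewrite /b /Z /cpart -/d; ring.
  by rewrite !sum_delta !divff ?mul1r // gt_eqF.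
have -> : t i k0 - t i L - kappa * cpart c (xs i) k0 - (t j k0 - t j L - kappa * cpart c (xs j) k0) = Z i - Z j.
  by rewrite /Z !(msg_dirv _ _ _ hL).
rewrite -val; apply: (lim_le0 lim).
have ev : \forall h \near (0:R)^'+, forall l, in_simplex (Y h l).
  apply: filter_forall => l; apply: ev_simplex => //.
  by rewrite sum_rowZ (sum_dirv _ _ hL) mulr0.
near=> h.
have h0 : 0 < h by near: h; exact: nbhs_right_gt.
have Ys : forall l, in_simplex (Y h l) by near: h; exact: ev.
have Wm : \sum_l wF l *: Y h l = mu.
  rewrite /Y; under eq_bigr do rewrite scalerDr !scalerA.
  rewrite big_split /= wFm -scaler_suml.
  have -> : \sum_l wF l * (h * b l) = h * (\sum_l wF l * b l).
    by rewrite mulr_sumr; apply: eq_bigr => l _; ring.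
  by rewrite sb mulr0 scale0r add0r.
have := imp_det id imp (fun l => ltW (wF0 l)) wF1 Ys Wm.
rewrite /truthful_payoff -subr_le0 => Hle; rewrite -(pmulr_rle0 _ h0).
have hn0 : h != 0 by rewrite gt_eqF.
suff -> : h * G h = \sum_i wF i * (msg_value t i (Y h i) - kappa * c (Y h i)) -
   \sum_j wF j * (msg_value t j (xs j) - kappa * c (xs j)) by [].
rewrite mulr_sumr -sumrB; apply: eq_bigr => l _; rewrite /Y scalerA msg_lin.
by field.
Unshelve. all: by end_near.
Qed.



Lemma sum_delta2 (R : realType) (I : finType) (i j : I) (f : I -> R) :
  \sum_l (((l == j)%:R - (l == i)%:R) * f l) = f j - f i.
Proof.
under eq_bigr do rewrite mulrBl.
by rewrite sumrB !sum_delta.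
Qed.

Lemma sum_deltaV (R : realType) (n : nat) (I : finType) (j : I) (f : I -> R)
  (u : 'rV[R]_n) :
  \sum_l (((l == j)%:R * f l) *: u) = f j *: u.
Proof. by rewrite -scaler_suml sum_delta. Qed.

Lemma sum_ind (R : realType) (I : finType) (j : I) :
  \sum_l ((l == j)%:R : R) = 1.
Proof.
rewrite -[RHS](sum_delta j (fun=> (1:R))).
by apply: eq_bigr => l _; rewrite mulr1.
Qed.

Lemma msgZ (R : realType) (n m : nat) (t : 'I_m -> 'I_n -> R) l a
  (u : 'rV[R]_n) : msg_value t l (a *: u) = a * msg_value t l u.
Proof.
by rewrite /msg_value mulr_sumr; apply: eq_bigr => i _; rewrite !mxE mulrA.
Qed.

Lemma sum_deltaF (R : realType) (n : nat) (I : finType) (j : I)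
  (F : I -> 'rV[R]_n) : \sum_l ((l == j)%:R *: F l) = F j.
Proof.
rewrite (bigD1 j) //= eqxx scale1r big1 ?addr0 // => l /negbTE ->.
by rewrite scale0r.
Qed.

Lemma levels_le (R : realType) (n m : nat) (mu : 'rV[R]_n) kappa
  (c : 'rV[R]_n -> R) (wF : 'I_m -> R) xs t (L : 'I_n) (i j : 'I_m) :
  is_last L ->
  implements mu kappa 0 c wF xs t ->
  (forall l, 0 < wF l) -> \sum_l wF l = 1 -> \sum_l wF l *: xs l = mu ->
  (forall l, in_int_simplex (xs l)) ->
  (forall l k, derivable c (xs l) (dirv R k)) ->
  (msg_value t j (xs j) - kappa * c (xs j))
   - (msg_value t i (xs i) - kappa * c (xs i))
  + \sum_k (xs i 0 k - xs j 0 k) * (t j k - t j L - kappa * cpart c (xs j) k)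
   <= 0.
Proof.
move=> hL imp wF0 wF1 wFm xint dc.
have [<-|ij] := eqVneq i j.
  by rewrite subrr add0r big1 // => k _; rewrite subrr mul0r.
have n0 : (0 < n)%N by exact: (leq_ltn_trans (leq0n _) (ltn_ord L)).
pose N : R := n%:R.
have N0 : N != 0 by rewrite pnatr_eq0 -lt0n.
pose g l x := msg_value t l x - kappa * c x.
pose u := xs i - xs j.
pose d (k : 'I_n) := dirv R k.
pose eps h := wF j * h / (1 - h).
pose om h l := wF l + eps h * ((l == j)%:R - (l == i)%:R).
pose a k := N * u 0 k.
pose Y h (p : 'I_m * 'I_n) := h *: (((p.1 == j)%:R * a p.2) *: d p.2) + xs p.1.
pose W h (p : 'I_m * 'I_n) := om h p.1 / N.
pose G h := g j (xs j) - g i (xs i) + N^-1 * \sum_k (a k * msg_value t j (d k)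
     - kappa * (h^-1 * (c (h *: (a k *: d k) + xs j) - c (xs j)))).
have lim : G @ 0^'+ --> g j (xs j) - g i (xs i) + N^-1 * \sum_k (a k * msg_value t j (d k)
     - kappa * (a k * 'D_(d k) c (xs j))).
  apply: cvgD; first exact: cvg_cst.
  apply: cvgMl_tmp; apply: cvg_sumR => k; apply: cvgB; first exact: cvg_cst.
  by apply: cvgMl_tmp; apply: quot_scaled.
have -> : (msg_value t j (xs j) - kappa * c (xs j))
   - (msg_value t i (xs i) - kappa * c (xs i))
  + \sum_k (xs i 0 k - xs j 0 k) * (t j k - t j L - kappa * cpart c (xs j) k)
  = g j (xs j) - g i (xs i) + N^-1 * \sum_k (a k * msg_value t j (d k)
     - kappa * (a k * 'D_(d k) c (xs j))).
  rewrite mulr_sumr; congr (_ + _); apply: eq_bigr => k _.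
  rewrite /a /u /d (msg_dirv _ _ _ hL) /cpart !mxE; field.
  exact: N0.
apply: (lim_le0 lim).
have ev : \forall h \near (0:R)^'+, forall p, in_simplex (Y h p).
  apply: filter_forall => p; apply: ev_simplex => //.
  by rewrite sum_rowZ (sum_dirv _ _ hL) mulr0.
have wij : 0 < wF i + wF j by rewrite addr_gt0.
near=> h.
have h0 : 0 < h by near: h; exact: nbhs_right_gt.
have h1 : h * (wF i + wF j) < wF i.
  rewrite -ltr_pdivlMr //; near: h; apply: nbhs_right_lt.
  by rewrite divr_gt0.
have Ys : forall p, in_simplex (Y h p) by near: h; exact: ev.
have wi := wF0 i; have wj := wF0 j.
have hlt1 : h < 1 by nra.
have omh : 0 < 1 - h by lra.
have e0 : 0 < eps h by rewrite /eps divr_gt0 // mulr_gt0.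
have ei : eps h <= wF i.
  rewrite /eps ler_pdivrMr //; nra.
have W0 : forall p, 0 <= W h p.
  move=> [l k]; rewrite /W /om /= divr_ge0 ?ler0n //.
  have [->|li] := eqVneq l i.
    by rewrite (negbTE ij) /= sub0r mulrN1 subr_ge0.
  rewrite subr0; apply: addr_ge0; first exact: ltW.
  by apply: mulr_ge0; [exact: ltW | exact: ler0n].
have omj : om h j * h = eps h.
  rewrite /om eqxx eq_sym (negbTE ij) subr0 mulr1 /eps; field; lra.
have som : \sum_l om h l = 1.
  rewrite /om big_split /= wF1 -mulr_sumr sumrB !sum_ind subrr mulr0 addr0 //.
have W1 : \sum_p W h p = 1.
  have -> : \sum_p W h p = \sum_l \sum_(k : 'I_n) (om h l / N).
    by rewrite (pair_bigA _ (fun l (k : 'I_n) => om h l / N)).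
  under eq_bigr do rewrite sumr_const card_ord -mulr_natr divfK //.
  exact: som.
have su : \sum_k u 0 k = 0.
  under eq_bigr do rewrite !mxE.
  by rewrite sumrB (proj2 (xint i)) (proj2 (xint j)) subrr.
have sad : \sum_k a k *: d k = N *: u.
  rewrite /a; under eq_bigr do rewrite -scalerA.
  by rewrite -scaler_sumr (decomp hL su).
have Wm : \sum_p W h p *: Y h p = mu.
  have -> : \sum_p W h p *: Y h p = \sum_l \sum_k ((om h l / N) *: (h *: (((l == j)%:R * a k) *: d k) + xs l)).
    by rewrite (pair_bigA _ (fun l (k : 'I_n) => (om h l / N) *: (h *: (((l == j)%:R * a k) *: d k) + xs l))).
  have E : forall l, \sum_k ((om h l / N) *: (h *: (((l == j)%:R * a k) *: d k) + xs l))
      = om h l *: xs l + ((l == j)%:R * (om h l * h)) *: u.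
    move=> l; under eq_bigr do rewrite scalerDr.
    rewrite big_split /= sumr_const card_ord scalerMnl -[om h l / N *+ n]mulr_natr divfK // addrC.
    congr (_ + _).
    under eq_bigr do rewrite !scalerA.
    have -> : \sum_k ((om h l / N * h * ((l == j)%:R * a k)) *: d k) =
              (om h l / N * h * (l == j)%:R) *: \sum_k (a k *: d k).
      by rewrite scaler_sumr; apply: eq_bigr => k _; rewrite scalerA; congr (_ *: _); ring.
    by rewrite sad scalerA; congr (_ *: _); field.
  under eq_bigr do rewrite E.
  rewrite big_split /= sum_deltaV omj.
  under eq_bigr do rewrite /om scalerDl.
  rewrite big_split /= wFm.
  under eq_bigr do rewrite -scalerA.
  rewrite -scaler_sumr.
  under eq_bigr do rewrite scalerBl.
  rewrite sumrB !sum_deltaF -addrA -scalerDr.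
  have -> : xs j - xs i + u = 0 by rewrite /u addrA subrK subrr.
  by rewrite scaler0 addr0.
have Hle := imp_det (fun p : 'I_m * 'I_n => p.1) imp W0 W1 Ys Wm.
pose Dl (k : 'I_n) := g j (h *: (a k *: d k) + xs j) - g j (xs j).
have E2 : forall l k, g l (h *: (((l == j)%:R * a k) *: d k) + xs l)
     = g l (xs l) + (l == j)%:R * Dl k.
  move=> l k; have [->|lj] := eqVneq l j.
    rewrite /= !mul1r /Dl; ring.
  by rewrite /= !mul0r scale0r scaler0 add0r addr0.
have H2 : \sum_p W h p * (msg_value t p.1 (Y h p) - kappa * c (Y h p))
   = \sum_l \sum_k ((om h l / N) * g l (h *: (((l == j)%:R * a k) *: d k) + xs l)).
  by rewrite (pair_bigA _ (fun l (k : 'I_n) => (om h l / N) * g l (h *: (((l == j)%:R * a k) *: d k) + xs l))).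
have E3 : forall l, \sum_k ((om h l / N) * g l (h *: (((l == j)%:R * a k) *: d k) + xs l))
   = om h l * g l (xs l) + (l == j)%:R * (om h l / N * \sum_k Dl k).
  move=> l; under eq_bigr do rewrite E2 mulrDr.
  rewrite big_split /= sumr_const card_ord -[_ *+ n]mulr_natr mulrAC divfK //.
  congr (_ + _); rewrite !mulr_sumr; apply: eq_bigr => k _; ring.
have H3 : \sum_l \sum_k ((om h l / N) * g l (h *: (((l == j)%:R * a k) *: d k) + xs l))
   = truthful_payoff kappa c t wF xs + eps h * (g j (xs j) - g i (xs i)) + om h j / N * \sum_k Dl k.
  under eq_bigr do rewrite E3.
  rewrite big_split /= sum_delta; congr (_ + _).
  rewrite /om; under eq_bigr do rewrite mulrDl.
  rewrite big_split /=; congr (_ + _).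
  rewrite -(sum_delta2 i j (fun l => g l (xs l))) mulr_sumr; apply: eq_bigr => l _; ring.
move: Hle; rewrite H2 H3 -subr_le0 => Hle.
rewrite -(pmulr_rle0 _ e0).
suff -> : eps h * G h = truthful_payoff kappa c t wF xs + eps h * (g j (xs j) - g i (xs i)) +
    om h j / N * \sum_k Dl k - truthful_payoff kappa c t wF xs by [].
have -> : forall A B C : R, A + B + C - A = B + C by move=> *; ring.
rewrite /G mulrDr; congr (_ + _).
rewrite !mulr_sumr; apply: eq_bigr => k _.
rewrite /Dl /g msg_lin msgZ -omj; field.
by rewrite N0 gt_eqF.
Unshelve. all: by end_near.
Qed.


Lemma sum_opt (R : realType) (I : finType) (F : option I -> R) :
  \sum_(d : option I) F d = F None + \sum_(d : I) F (Some d).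
Proof.
rewrite (bigD1 None) //=; congr (_ + _).
rewrite (reindex_omap Some id) /=.
  by apply: eq_bigl => i; rewrite eqxx.
by case.
Qed.

Lemma vinv_lt (R : realType) (v vinv : R -> R) (a b : R) :
  {homo v : x y / x < y} -> (forall u : R, 0 <= u -> v (vinv u) = u) ->
  0 <= a -> a < b -> vinv a < vinv b.
Proof.
move=> hv hvi a0 ab; have b0 := le_trans a0 (ltW ab); rewrite ltNge; apply/negP; rewrite le_eqVlt; case/orP => [/eqP E|E].
  by move: ab; rewrite -(hvi a a0) -(hvi b b0) E ltxx.
have := hv _ _ E; rewrite hvi // hvi //.
by move=> /(lt_trans ab); rewrite ltxx.
Qed.

Lemma entry_mean (R : realType) (n p : nat) (w : 'I_p -> R) (y : 'I_p -> 'rV[R]_n)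
  (mu : 'rV[R]_n) k :
  \sum_i w i *: y i = mu -> \sum_i w i * y i 0 k = mu 0 k.
Proof. by move=> <-; rewrite summxE; apply: eq_bigr => i _; rewrite mxE. Qed.

Lemma msg_shift (R : realType) (n m : nat) (t : 'I_m -> 'I_n -> R) (k : 'I_n)
  (dl : R) j (y : 'rV[R]_n) :
  msg_value (fun j k' => t j k' - (k' == k)%:R * dl) j y = msg_value t j y - dl * y 0 k.
Proof.
rewrite /msg_value; under eq_bigr do rewrite mulrBr.
rewrite sumrB; congr (_ - _).
rewrite -[RHS](sum_delta k (fun k' => dl * y 0 k')).
by apply: eq_bigr => i _; ring.
Qed.

Lemma shift_implements (R : realType) (n m : nat) (mu : 'rV[R]_n) kappa
  (c : 'rV[R]_n -> R) (wF : 'I_m -> R) xs t (k : 'I_n) (dl : R) (j0 : 'I_m) :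
  implements mu kappa 0 c wF xs t -> in_simplex mu -> c mu = 0 ->
  \sum_j wF j *: xs j = mu ->
  (forall j, 0 <= t j k - dl) ->
  implements mu kappa 0 c wF xs (fun j k' => t j k' - (k' == k)%:R * dl).
Proof.
move=> [t0 [_ imp]] musimp cmu wFm tdl.
set t' := (fun j k' => t j k' - (k' == k)%:R * dl).
have t'0 : forall j k', 0 <= t' j k'.
  move=> j k'; rewrite /t'; have [->|] := eqVneq k' k; first by rewrite mul1r.
  by rewrite mul0r subr0.
have msg0 : forall j (y : 'rV[R]_n), in_simplex y -> 0 <= msg_value t' j y.
  move=> j y [y0 _]; rewrite /msg_value; apply: sumr_ge0 => i _.
  exact: mulr_ge0.
have main : forall (p : nat) (w : 'I_p -> R) (y : 'I_p -> 'rV[R]_n)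
          (s : 'I_p -> option 'I_m -> R),
      bayes_plausible mu w y -> valid_strategy s ->
      agent_payoff kappa 0 c t' w y s <= truthful_payoff kappa c t' wF xs.
  move=> p w y s bp vs.
  have [w0 [w1 [ys wm]]] := bp.
  pose st i d := match d with
    | Some d' => s i (Some d') + (d' == j0)%:R * s i None | None => 0 end.
  have vst : valid_strategy st.
    move=> i; have [s0 s1] := vs i; split.
      case=> [d|] //=; apply: addr_ge0 => //; exact: mulr_ge0.
    rewrite sum_opt /= add0r big_split /= sum_delta.
    by rewrite -s1 sum_opt addrC.
  have sst : forall i, \sum_(d : 'I_m) st i (Some d) = 1.
    by move=> i; have [_] := vst i; rewrite sum_opt /= add0r.
  have A : agent_payoff kappa 0 c t' w y s <= agent_payoff kappa 0 c t' w y st.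
    apply: ler_sum => i _; apply: ler_wpM2l => //; apply: lerB => //.
    rewrite !sum_opt /= !mulr0 !add0r.
    under [X in _ <= X]eq_bigr do rewrite mulrDl.
    rewrite big_split /= lerDl.
    apply: sumr_ge0 => d _; apply: mulr_ge0; last exact: msg0.
    apply: mulr_ge0 => //; have [s0 _] := vs i; exact: s0.
  have B : agent_payoff kappa 0 c t' w y st = agent_payoff kappa 0 c t w y st - dl * mu 0 k.
    rewrite /agent_payoff -(entry_mean k wm) mulr_sumr -sumrB; apply: eq_bigr => i _.
    rewrite !sum_opt /= !mulr0 !add0r.
    under eq_bigr do rewrite msg_shift.
    have -> : \sum_(d : 'I_m) st i (Some d) * (msg_value t d (y i) - dl * y i 0 k)
      = \sum_(d : 'I_m) st i (Some d) * msg_value t d (y i) - dl * y i 0 k.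
      under eq_bigr do rewrite mulrBr.
      by rewrite sumrB -mulr_suml sst mul1r.
    ring.
  have C : agent_payoff kappa 0 c t w y st <= truthful_payoff kappa c t wF xs.
    exact: imp.
  have D : truthful_payoff kappa c t' wF xs = truthful_payoff kappa c t wF xs - dl * mu 0 k.
    rewrite /truthful_payoff -(entry_mean k wFm) mulr_sumr -sumrB.
    apply: eq_bigr => j _; rewrite msg_shift; ring.
  rewrite D; apply: le_trans A _; rewrite B; exact: lerB.
split => //; split => //.
have := main 1%N (fun=> 1) (fun=> mu) (fun _ d => (d == Some j0)%:R).
rewrite /agent_payoff big_ord1 mul1r.
rewrite (sum_delta (Some j0) (fun d => match d with Some d' => msg_value t' d' mu | None => 0 end)).
rewrite cmu mulr0 subr0 => H; apply: le_trans (H _ _).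
  exact: msg0.
  split => //; split; first by rewrite big_ord1.
  by split => //; rewrite big_ord1 scale1r.
move=> i; split; first by move=> d.
rewrite -[RHS](sum_delta (Some j0) (fun=> (1:R))).
by apply: eq_bigr => d _; rewrite mulr1.
Qed.

Lemma zero_exists (R : realType) (n m : nat) (mu : 'rV[R]_n) kappa
  (c : 'rV[R]_n -> R) (v vinv : R -> R) (wF : 'I_m -> R) xs t (k : 'I_n) :
  {homo v : a b / a < b} -> (forall u : R, 0 <= u -> v (vinv u) = u) ->
  (forall j, 0 < wF j) -> \sum_j wF j = 1 -> \sum_j wF j *: xs j = mu ->
  (forall j, in_int_simplex (xs j)) -> in_simplex mu -> c mu = 0 ->
  implements mu kappa 0 c wF xs t ->
  (forall t' : 'I_m -> 'I_n -> R, implements mu kappa 0 c wF xs t' ->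
     principal_cost vinv wF xs t <= principal_cost vinv wF xs t') ->
  exists j, t j k = 0.
Proof.
move=> hv hvi wF0 wF1 wFm xint musimp cmu imp opt.
have [j0 _] : exists j0 : 'I_m, true.
  case: (pickP (fun _ : 'I_m => true)) => [j0 _|none]; first by exists j0.
  have : \sum_j wF j = 0 by rewrite big1 // => j _; have := none j.
  by rewrite wF1 => /eqP; rewrite oner_eq0.
case: (pselect (exists j, t j k = 0)) => // Hn.
have tpos : forall j, 0 < t j k.
  move=> j; rewrite lt0r (proj1 imp j k) andbT; apply/eqP => E; apply: Hn.
  by exists j.
have [jm _ jmin] := @arg_minP _ _ _ j0 xpredT (fun j => t j k) isT.
set dl := t jm k.
have tdl : forall j, 0 <= t j k - dl by move=> j; rewrite subr_ge0 jmin.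
have imp' := shift_implements j0 imp musimp cmu wFm tdl.
exfalso; move: (opt _ imp'); rewrite leNgt => /negP; apply.
rewrite /principal_cost; apply: ltr_sum.
  by apply/hasP; exists j0 => //; exact: mem_index_enum.
move=> j _; rewrite ltr_pM2l //.
rewrite (bigD1 k) //= [X in _ < X](bigD1 k) //=.
apply: ltr_leD.
  rewrite eqxx mul1r ltr_pM2l ?(proj1 (xint j)) //; apply: (vinv_lt hv hvi) => //.
  have := tpos jm; rewrite -/dl; lra.
by apply: ler_sum => k' /negbTE ->; rewrite mul0r subr0.
Qed.



Lemma cpart_last (R : realType) (n : nat) (c : 'rV[R]_n -> R) x (L : 'I_n) :
  is_last L -> cpart c x L = 0.
Proof.
move=> hL; rewrite /cpart dirv_last // /derive.
have -> : (fun h : R => h^-1 *: ((c \o shift x) (h *: (0 : 'rV[R]_n)) - c x)) = fun=> 0.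
  by apply: funext => h /=; rewrite scaler0 add0r subrr scaler0.
by rewrite lim_cst.
Qed.

Lemma formula (R : realType) (n m : nat) (mu : 'rV[R]_n) kappa
  (c : 'rV[R]_n -> R) (wF : 'I_m -> R) xs t (L : 'I_n) (j js : 'I_m) (k : 'I_n) :
  is_last L ->
  implements mu kappa 0 c wF xs t ->
  (forall l, 0 < wF l) -> \sum_l wF l = 1 -> \sum_l wF l *: xs l = mu ->
  (forall l, in_int_simplex (xs l)) ->
  (forall l k, derivable c (xs l) (dirv R k)) ->
  t j k - t js k = Xk kappa c (xs j) (xs js) k.
Proof.
move=> hL imp wF0 wF1 wFm xint dc.
pose S l k' := t l k' - t l L - kappa * cpart c (xs l) k'.
have [A Seq] : exists A : 'I_n -> R, forall l k', S l k' = A k'.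
  exists (S js); move=> l k'.
  have H1 := slopes_le l js l hL imp wF0 wF1 wFm xint (fun l => dc l k').
  have H2 := slopes_le js l l hL imp wF0 wF1 wFm xint (fun l => dc l k').
  rewrite /S; lra.
have tl : forall l k', t l k' = A k' + t l L + kappa * cpart c (xs l) k'.
  by move=> l k'; have := Seq l k'; rewrite /S => E; lra.
have P1 : forall l, \sum_k' xs l 0 k' * t l k' =
    \sum_k' xs l 0 k' * A k' + t l L + kappa * \sum_(k' | ~~ is_last k') xs l 0 k' * cpart c (xs l) k'.
  move=> l; under eq_bigr do rewrite tl !mulrDr.
  rewrite !big_split /= -mulr_suml (proj2 (xint l)) mul1r; congr (_ + _).
  rewrite (bigID (fun k0 : 'I_n => is_last k0)) /= big1 ?add0r; last first.
    by move=> k' hk'; rewrite cpart_last // !mulr0.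
  by rewrite mulr_sumr; apply: eq_bigr => k' _; ring.
have gexp : forall l, msg_value t l (xs l) - kappa * c (xs l)
   = \sum_k' xs l 0 k' * A k' + t l L - xiterm kappa c (xs l).
  by move=> l; rewrite /msg_value P1 /xiterm; ring.
have L1 := levels_le js j hL imp wF0 wF1 wFm xint dc.
have L2 := levels_le j js hL imp wF0 wF1 wFm xint dc.
rewrite !gexp in L1 L2.
have E1 : \sum_k (xs js 0 k - xs j 0 k) * (t j k - t j L - kappa * cpart c (xs j) k)
   = \sum_k xs js 0 k * A k - \sum_k xs j 0 k * A k.
  by rewrite -sumrB; apply: eq_bigr => k' _; rewrite -/(S j k') Seq; ring.
have E2 : \sum_k (xs j 0 k - xs js 0 k) * (t js k - t js L - kappa * cpart c (xs js) k)
   = \sum_k xs j 0 k * A k - \sum_k xs js 0 k * A k.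
  by rewrite -sumrB; apply: eq_bigr => k' _; rewrite -/(S js k') Seq; ring.
rewrite E1 in L1; rewrite E2 in L2.
have XL : t j L - t js L = Xi kappa c (xs j) (xs js) by rewrite /Xi; lra.
rewrite /Xk; case: ifP => lk.
  by have -> : k = L by apply/eqP; rewrite -(@is_last_eq _ L k hL).
rewrite (tl j k) (tl js k) -XL; ring.
Qed.


Unset Implicit Arguments. Set Strict Implicit.

Theorem proposition3 (R : realType) (n : nat)
  (mu : 'rV[R]_n) (kappa v0 : R) (c : 'rV[R]_n -> R) (v vinv : R -> R)
  (m : nat) (wF : 'I_m -> R) (xs : 'I_m -> 'rV[R]_n) (t : 'I_m -> 'I_n -> R) :
  (* full-support prior *)
  in_int_simplex mu ->
  (* information cost *)
  0 < kappa ->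
  (forall x, in_simplex x -> 0 <= c x) ->
  strictly_convex_on_simplex c ->
  C2_on_int_simplex c ->
  (exists B : R, forall x, in_int_simplex x -> c x <= B) ->
  c mu = 0 ->
  (* utility for money: strictly increasing, C^1, v(0) = 0; vinv = v^-1 *)
  {homo v : a b / a < b} ->
  (forall a : R, derivable v a 1) ->
  continuous (v^`()) ->
  v 0 = 0 ->
  (forall u : R, 0 <= u -> v (vinv u) = u) ->
  (* outside option *)
  v0 = 0 ->
  (* F: Bayes-plausible with support {xs j} in the interior, m <= n *)
  (forall j, 0 < wF j) ->
  \sum_(j < m) wF j = 1 ->
  \sum_(j < m) wF j *: xs j = mu ->
  injective xs ->
  (forall j, in_int_simplex (xs j)) ->
  (m <= n)%N ->
  (* (M,t) implements F at minimal expected cost *)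
  implements mu kappa v0 c wF xs t ->
  (forall t' : 'I_m -> 'I_n -> R, implements mu kappa v0 c wF xs t' ->
     principal_cost vinv wF xs t <= principal_cost vinv wF xs t') ->
  forall k : 'I_n, exists jstar : 'I_m,
    t jstar k = 0 /\ forall j : 'I_m, t j k = Xk kappa c (xs j) (xs jstar) k.
Proof.
move=> mu_int kap0 cnn cconv C2 bnd cmu hv dv cdv v00 hvi v0E wF0 wF1 wFm inj xint mn imp opt k.
subst v0.
have n0 : (0 < n)%N := leq_ltn_trans (leq0n k) (ltn_ord k).
pose L : 'I_n := Ordinal (n:=n) (m:=n.-1) (ltac:(by rewrite ltn_predL)).
have hL : is_last L by rewrite /is_last.
have dc : forall l k', derivable c (xs l) (dirv R k') :=
  fun l k' => proj1 (proj1 (C2 k' k') (xs l) (xint l)).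
have musimp : in_simplex mu.
  by split; [move=> i; exact: ltW (proj1 mu_int i) | exact: proj2 mu_int].
have [js hjs] := zero_exists k hv hvi wF0 wF1 wFm xint musimp cmu imp opt.
exists js; split => // j.
have := formula j js k hL imp wF0 wF1 wFm xint dc.
by rewrite hjs subr0.
Qed.
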